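(* Let $\bar\rho>0$, $\bar\theta>0$, $R>0$, $c_v>0$, $\nu_0>0$, $k_0>0$ be constants and for $\xi\in\mathbb{R}$ let \[ A(\xi)=\begin{pmatrix}0&\bar\rho i\xi&0\\ \frac{R\bar\theta}{\bar\rho}i\xi&-\nu_0\xi^2&Ri\xi\\ 0&\frac{R\bar\theta}{c_v}i\xi&-k_0\xi^2\end{pmatrix}. \] Let $-\delta(\xi)$ be an eigenvalue of $A(\xi)$ (defined for $|\xi|$ large) with $\lim_{|\xi|\to\infty}\delta(\xi)=\omega_0:=R\bar\theta/\nu_0$. Then, for $\xi\neq0$, the vector $\left(1,\frac{i\delta(\xi)}{\bar\rho\xi},d_\delta(\xi)\right)$, where \[ d_\delta(\xi)=-\frac{\delta(\xi)^2-\nu_0\xi^2\delta(\xi)+R\bar\theta\xi^2}{R\bar\rho\xi^2}, \] is an eigenvector of $A(\xi)$ for the eigenvalue $-\delta(\xi)$, and for $|\xi|$ sufficiently large $|d_\delta(\xi)|\le C/|\xi|^2$ for some positive constant $C$.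
   Context: Such an eigenvalue branch $-\delta(\xi)$ exists for $|\xi|$ sufficiently large. *)

(* Defs.v *)
From HB Require Import structures.
From mathcomp Require Import all_boot all_order all_algebra.
From mathcomp Require Import complex.
From mathcomp Require Import reals.
Set Implicit Arguments. Unset Strict Implicit. Unset Printing Implicit Defensive.
Import Order.TTheory GRing.Theory Num.Theory.
Local Open Scope ring_scope.
Local Open Scope complex_scope.

(* The 3x3 complex matrix A(xi) of the paper; parameters
   rho = \bar\rho, th = \bar\theta, Rg = R, cv = c_v, nu = \nu_0, k = k_0. *)
Definition Amat (R : realType) (rho th Rg cv nu k xi : R) : 'M[R[i]]_3 :=
  \matrix_(a < 3, b < 3)
    nth 0 (nth [::]
      [:: [:: 0 ; (rho * xi) *i ; 0 ];
          [:: ((Rg * th / rho) * xi) *i ; (- (nu * xi ^+ 2))%:C ; (Rg * xi) *i ];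
          [:: 0 ; ((Rg * th / cv) * xi) *i ; (- (k * xi ^+ 2))%:C ] ] a) b.

Definition d_delta (R : realType) (rho th Rg nu : R) (delta : R -> R[i]) (xi : R) : R[i] :=
  - ((delta xi) ^+ 2 - (nu * xi ^+ 2)%:C * delta xi + (Rg * th * xi ^+ 2)%:C)
    / (Rg * rho * xi ^+ 2)%:C.

Definition evec (R : realType) (rho th Rg nu : R) (delta : R -> R[i]) (xi : R) : 'cV[R[i]]_3 :=
  \col_(a < 3)
    nth 0 [:: 1 ; 'i * delta xi / (rho * xi)%:C ; d_delta rho th Rg nu delta xi ] a.

(* Main.v *)
Require Import Defs.
From HB Require Import structures.
From mathcomp Require Import all_boot all_order all_algebra.
From mathcomp Require Import complex.
From mathcomp Require Import reals.
From mathcomp Require Import ring.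
Import Order.TTheory GRing.Theory Num.Theory.
Local Open Scope ring_scope.
Local Open Scope complex_scope.

Lemma cI (R : realType) (x : R) : x *i = x%:C * 'i.
Proof. by apply/eqP; rewrite eq_complex /= !(mulr0,mul0r,mulr1,subr0,addr0) !eqxx. Qed.

Lemma adj3 {F : comNzRingType} (v1 v2 v3 b11 b12 b13 b21 b22 b23 b31 b32 b33 : F) :
  let e1 := v1*b11 + v2*b21 + v3*b31 in
  let e2 := v1*b12 + v2*b22 + v3*b32 in
  let e3 := v1*b13 + v2*b23 + v3*b33 in
  let D := b11*(b22*b33 - b23*b32) - b12*(b21*b33 - b23*b31) + b13*(b21*b32 - b22*b31) in
  [/\ v1 * D = e1 * (b22*b33 - b23*b32) - e2 * (b21*b33 - b23*b31) + e3 * (b21*b32 - b22*b31),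
      v2 * D = - e1 * (b12*b33 - b13*b32) + e2 * (b11*b33 - b13*b31) - e3 * (b11*b32 - b12*b31) &
      v3 * D = e1 * (b12*b23 - b13*b22) - e2 * (b11*b23 - b13*b21) + e3 * (b11*b22 - b12*b21)].
Proof. by move=> e1 e2 e3 D; split; rewrite /e1 /e2 /e3 /D; ring. Qed.

Lemma adj3z {F : fieldType} (v1 v2 v3 b11 b12 b13 b21 b22 b23 b31 b32 b33 : F) :
  ~ (v1 = 0 /\ v2 = 0 /\ v3 = 0) ->
  v1*b11 + v2*b21 + v3*b31 = 0 ->
  v1*b12 + v2*b22 + v3*b32 = 0 ->
  v1*b13 + v2*b23 + v3*b33 = 0 ->
  b11*(b22*b33 - b23*b32) - b12*(b21*b33 - b23*b31) + b13*(b21*b32 - b22*b31) = 0.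
Proof.
move=> hv h1 h2 h3.
have [k1 k2 k3] := adj3 v1 v2 v3 b11 b12 b13 b21 b22 b23 b31 b32 b33.
rewrite /= h1 h2 h3 in k1 k2 k3.
have z : forall x, x * (b11*(b22*b33 - b23*b32) - b12*(b21*b33 - b23*b31) + b13*(b21*b32 - b22*b31)) = 0 -> x = 0 \/ (b11*(b22*b33 - b23*b32) - b12*(b21*b33 - b23*b31) + b13*(b21*b32 - b22*b31)) = 0.
  by move=> x /eqP; rewrite mulf_eq0 => /orP [/eqP|/eqP]; [left|right].
case: (z v1); first by rewrite k1; ring. 2: by [].
case: (z v2); first by rewrite k2; ring. 2: by [].
case: (z v3); first by rewrite k3; ring. 2: by [].
by move=> a b c; exfalso; apply: hv.
Qed.

Lemma fromD {F : comNzRingType} (Q D i : F) : i^+2 = -1 -> forall S, Q = D + (i^+2+1)*S -> D = 0 -> Q = 0.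
Proof. by move=> hi S -> ->; rewrite hi addNr mul0r addr0. Qed.

Lemma charQ (R : realType) (rho th Rg cv nu k : R)
  (hrho : 0 < rho) (hcv : 0 < cv) (xi : R) (d : R[i]) :
  eigenvalue (Amat rho th Rg cv nu k xi) (- d) ->
  (d - (k*xi^+2)%:C) * (d^+2 - (nu*xi^+2)%:C*d + (Rg*th*xi^+2)%:C)
    + (Rg*(Rg*th/cv)*xi^+2)%:C * d = 0.
Proof.
move=> /eigenvalueP [v hv vn0].
have E j : (v *m Amat rho th Rg cv nu k xi) 0 j + d * v 0 j = 0.
  by rewrite hv !mxE mulNr addNr.
have e1 := E ord0; have e2 := E (lift ord0 ord0); have e3 := E (lift ord0 (lift ord0 ord0)).
rewrite !mxE !big_ord_recl !big_ord0 /= !mxE /= !cI in e1 e2 e3.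
set v1 := v 0 ord0 in e1 e2 e3; set v2 := v 0 (lift ord0 ord0) in e1 e2 e3;
set v3 := v 0 (lift ord0 (lift ord0 ord0)) in e1 e2 e3.
have nz : ~ (v1 = 0 /\ v2 = 0 /\ v3 = 0).
  move=> [z1 [z2 z3]]; move/eqP: vn0; apply; apply/matrixP => i j.
  rewrite !mxE (ord1 i); case: j => [[|[|[|j]]] hj] //.
  - by rewrite -z1; congr (v 0 _); apply: val_inj.
  - by rewrite -z2; congr (v 0 _); apply: val_inj.
  - by rewrite -z3; congr (v 0 _); apply: val_inj.
have hD := adj3z v1 v2 v3 d ((rho*xi)%:C * 'i) 0 ((Rg * th / rho * xi)%:C * 'i)
  ((- (nu * xi ^+ 2))%:C + d) ((Rg * xi)%:C * 'i) 0 ((Rg * th / cv * xi)%:C * 'i)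
  ((- (k * xi ^+ 2))%:C + d) nz.
have := hD ltac:(rewrite -[X in _ = X]e1; ring) ltac:(rewrite -[X in _ = X]e2; ring) ltac:(rewrite -[X in _ = X]e3; ring).
have ii : 'i ^+ 2 = -1 :> R[i] := sqr_i R.
have rn : rho%:C != 0 :> R[i].
  by rewrite eq_complex /= eqxx andbT gt_eqF.
move=> {}hD.
apply: (@fromD _ _ _ _ ii ((Rg*(Rg*th/cv)*xi^+2)%:C * d + (Rg*th*xi^+2)%:C * (d - (k*xi^+2)%:C)) _ hD).
field; apply/andP; split; rewrite eq_complex /= eqxx andbT gt_eqF //.
Qed.

Lemma bound {F : numFieldType} (dl w c k x2 : F) : 0 <= w -> 0 < c -> 0 < k -> 0 < x2 ->
  `|dl - w| < 1 -> 2*(w+1) <= k*x2 ->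
  dl - k*x2 != 0 /\ `|c * dl / (dl - k*x2)| <= (2*c*(w+1)/k) / x2.
Proof.
move=> hw hc hk hx hdw h2.
have hd : `|dl| <= w + 1.
  have := ler_normD (dl - w) w; rewrite subrK (ger0_norm hw) => h.
  apply: le_trans h _; rewrite [w + 1]addrC lerD2r; exact: ltW.
have hkx : 0 < k * x2 by rewrite mulr_gt0.
have hD : k*x2 - (w+1) <= `|dl - k*x2|.
  have := lerB_dist (k*x2) dl; rewrite distrC (gtr0_norm hkx) => h.
  by apply: le_trans h; rewrite lerD2l lerN2.
have hw1 : 0 < w + 1 by rewrite ltr_wpDl.
have hhalf : k*x2/2 <= k*x2 - (w+1).
  rewrite -subr_ge0.
  have -> : k * x2 - (w + 1) - k * x2 / 2 = (k*x2 - 2*(w+1))/2 by field.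
  by rewrite divr_ge0 ?subr_ge0 ?ler0n.
have Dpos : 0 < `|dl - k*x2|.
  apply: lt_le_trans hD; apply: lt_le_trans hhalf; rewrite divr_gt0 ?ltr0n //.
split; first by rewrite -normr_gt0.
rewrite normrM normfV normrM (gtr0_norm hc) ler_pdivrMr //.
apply: (@le_trans _ _ (c * (w+1))); first by rewrite ler_pM2l.
have -> : c * (w+1) = (2*c*(w+1)/k) / x2 * (k*x2/2).
  by field; rewrite ?pnatr_eq0 ?gt_eqF.
rewrite ler_pM2l; first by apply: le_trans hD.
by rewrite !divr_gt0 ?mulr_gt0 ?ltr0n.
Qed.

Lemma fromQ {F : comNzRingType} (L Rr i S T Q : F) : i^+2 = -1 -> Q = 0 ->
  L = Rr + (i^+2+1)*S + T*Q -> L = Rr.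
Proof. by move=> hi hq ->; rewrite hi hq addNr mul0r mulr0 !addr0. Qed.

Theorem lemma2p7 (R : realType) (rho th Rg cv nu k : R)
  (hrho : 0 < rho) (hth : 0 < th) (hRg : 0 < Rg) (hcv : 0 < cv)
  (hnu : 0 < nu) (hk : 0 < k)
  (delta : R -> R[i]) (M : R)
  (heig : forall xi : R, M < `|xi| ->
     eigenvalue (Amat rho th Rg cv nu k xi) (- delta xi))
  (hlim : forall eps : R, 0 < eps -> exists N : R, forall xi : R, N < `|xi| ->
     `|delta xi - (Rg * th / nu)%:C| < eps%:C) :
  (forall xi : R, M < `|xi| -> xi != 0 ->
     evec rho th Rg nu delta xi != 0 /\
     Amat rho th Rg cv nu k xi *m evec rho th Rg nu delta xi
       = (- delta xi) *: evec rho th Rg nu delta xi) /\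
  (exists C : R, 0 < C /\ exists N : R, forall xi : R, N < `|xi| ->
     `|d_delta rho th Rg nu delta xi| <= (C / xi ^+ 2)%:C).
Proof.
have ii : 'i ^+ 2 = -1 :> R[i] := sqr_i R.
have cnz (x : R) : 0 < x -> x%:C != 0 :> R[i].
  by move=> hx; rewrite eq_complex /= eqxx andbT gt_eqF.
have cnz' (x : R) : x != 0 -> x%:C != 0 :> R[i].
  by move=> hx; rewrite eq_complex /= eqxx andbT.
split.
  move=> xi hM hx0; have hQ := @charQ R rho th Rg cv nu k hrho hcv xi (delta xi) (heig xi hM).
  split.
    apply/negP => /eqP /matrixP /(_ ord0 ord0); rewrite !mxE /=; apply/eqP; exact: oner_neq0.
  apply/matrixP => i j; rewrite (ord1 j) !mxE !big_ord_recl !big_ord0 /= !mxE /= !cI /d_delta.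
  case: i => [[|[|[|i]]] hi] //=; rewrite ?mxE /=.
  - apply: (@fromQ _ _ _ _ (delta xi) 0 0 ii erefl); field.
    by rewrite !cnz' // gt_eqF.
  - field.
    by rewrite !cnz' // gt_eqF.
  - have := @fromQ _ _ _ _ ((Rg*th/cv)%:C * delta xi / rho%:C) (-1/(Rg*rho*xi^+2)%:C) _ ii hQ; apply; field.
    by rewrite !cnz' // gt_eqF.
set w := Rg * th / nu.
have hw : 0 < w by rewrite divr_gt0 ?mulr_gt0.
have [N1 hN1] := hlim 1 ltr01.
pose C := 2 * (Rg*th/cv/rho) * (w+1) / k.
have cpos (x : R) : 0 < x -> 0 < x%:C :> R[i] by move=> hx; rewrite ltcE /= eqxx.
have hb : 0 < Rg*th/cv/rho by rewrite !divr_gt0 // mulr_gt0.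
have hw1 : 0 < w + 1 by rewrite addr_gt0.
exists C; split.
  by rewrite /C divr_gt0 // mulr_gt0 // mulr_gt0.
exists (Num.max M (Num.max N1 (Num.max 1 (2*(w+1)/k)))); move=> xi.
rewrite !gt_max => /and4P [hM hN hx1 hxk].
have hx0 : xi != 0 by rewrite -normr_gt0 (lt_trans ltr01).
have hQ := @charQ R rho th Rg cv nu k hrho hcv xi (delta xi) (heig xi hM).
have hkx : 2 * (w+1) <= k * xi ^+ 2.
  rewrite ltr_pdivrMr // in hxk.
  rewrite -real_normK ?num_real //.
  have ha : 0 < `|xi| by rewrite (lt_trans ltr01).
  apply: (le_trans (ltW hxk)); rewrite [_ * k]mulrC ler_pM2l // expr2 ler_peMl //; exact: ltW.
have hkxC : 2 * (w%:C + 1) <= k%:C * (xi^+2)%:C :> R[i].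
  have e1 : 2 * (w%:C + 1) = (2*(w+1))%:C :> R[i] by field.
  by rewrite e1 -rmorphM lecR.
have [hnz hbd] := @bound _ (delta xi) w%:C (Rg*th/cv/rho)%:C k%:C (xi^+2)%:C
  ltac:(by rewrite ler0c ltW) ltac:(by apply: cpos; rewrite !divr_gt0 ?mulr_gt0)
  (cpos _ hk) ltac:(by apply: cpos; rewrite -real_normK ?num_real // exprn_gt0 // normr_gt0)
  (hN1 _ hN)
  hkxC.
have -> : d_delta rho th Rg nu delta xi =
   (Rg*th/cv/rho)%:C * delta xi / (delta xi - k%:C * (xi^+2)%:C).
  have := @fromQ _ _ _ _ 0 (-1/((Rg*rho*xi^+2)%:C * (delta xi - k%:C * (xi^+2)%:C))) _ ii hQ.
  apply; rewrite /d_delta; field.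
  by rewrite -rmorphXn hnz !cnz' // gt_eqF.
apply: (le_trans hbd); rewrite le_eqVlt; apply/orP; left; apply/eqP; rewrite /C /w; field.
by rewrite !cnz' // gt_eqF.
Qed.
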